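(* Let $n\geq2$. There exists at least one homogeneous harmonic polynomial $h$ of degree three on $\mathbb{R}^{n+1}$ which is $(n+2)$-symmetric and satisfies $\int_{B_1}h(y)\,dy=0$.
   Context: Fix $n+2$ points $q_1,\dots,q_{n+2}\in\mathbb{S}^n\subset\mathbb{R}^{n+1}$ spread evenly on $\mathbb{S}^n$ (vertices of an inscribed regular simplex). $\mathcal{S}_{n+2}(q)$ is the set of rotations $\phi\in SO(n+1)$ mapping $\{q_1,\dots,q_{n+2}\}$ onto itself; $h$ is $(n+2)$-symmetric if $h\circ\phi=h$ for all $\phi\in\mathcal{S}_{n+2}(q)$. $B_1$ is the unit ball of $\mathbb{R}^{n+1}$. *)

(* Defs.v *)
From Stdlib Require Import Reals.
From Coquelicot Require Import Coquelicot.
From mathcomp Require Import all_boot all_algebra.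
From mathcomp Require Import Rstruct.
From mathcomp Require Import mpoly.

Set Implicit Arguments.
Unset Strict Implicit.
Unset Printing Implicit Defensive.

Import GRing.Theory.
Local Open Scope ring_scope.

Definition dotv (m : nat) (x y : 'rV[R]_m) : R := (x *m y^T) 0 0.

(* q_1,...,q_{n+2} are the vertices of a regular simplex inscribed in S^n:
   unit vectors with pairwise inner products -1/(n+1). *)
Definition regular_simplex (n : nat) (q : 'I_n.+2 -> 'rV[R]_n.+1) : Prop :=
  (forall i, dotv (q i) (q i) = 1) /\
  (forall i j, i != j -> dotv (q i) (q j) = - (n.+1%:R)^-1).

Definition is_rotation (m : nat) (M : 'M[R]_m) : Prop :=
  M *m M^T = 1%:M /\ \det M = 1.

Definition in_Sq (n : nat) (q : 'I_n.+2 -> 'rV[R]_n.+1) (M : 'M[R]_n.+1) : Prop :=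
  is_rotation M /\
  (forall i, exists j, q i *m M = q j) /\
  (forall j, exists i, q i *m M = q j).

Definition peval (m : nat) (p : {mpoly R[m]}) (x : 'rV[R]_m) : R :=
  p.@[fun i => x 0 i].

Definition symmetric_q (n : nat) (q : 'I_n.+2 -> 'rV[R]_n.+1)
  (p : {mpoly R[n.+1]}) : Prop :=
  forall M, in_Sq q M -> forall x : 'rV[R]_n.+1, peval p (x *m M) = peval p x.

Definition harmonic (m : nat) (p : {mpoly R[m]}) : Prop :=
  \sum_(i < m) mderiv i (mderiv i p) = 0.

(* Integral over the ball of radius r centred at 0 in R^k, of a function of a
   point given by its coordinates (nat -> R, only the first k used), by
   iterated Riemann integration (Fubini):
   int_{B^{k+1}_r} f = int_{-r}^{r} int_{B^k_{sqrt(r^2-t^2)}} f(t,y) dy dt. *)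
Fixpoint ball_integral (k : nat) (r : R) (f : (nat -> R) -> R) : R :=
  match k with
  | O => f (fun _ => 0%R)
  | S k' =>
      RInt (fun t =>
              ball_integral k' (sqrt (r * r - t * t)%R)
                (fun y => f (fun i => match i with O => t | S i' => y i' end)))
           (- r)%R r
  end.

Definition unit_ball_integral (m : nat) (p : {mpoly R[m]}) : R :=
  ball_integral m 1%R (fun y => peval p (\row_(i < m) y (nat_of_ord i))).

(* Main.v *)
Require Import Defs.
From Stdlib Require Import Reals Lra Classical FunctionalExtensionality PropExtensionality.
From Coquelicot Require Import Coquelicot.
From mathcomp Require Import all_boot all_algebra.
From mathcomp Require Import Rstruct.
From mathcomp Require Import mpoly.

Module IntPart.
Local Open Scope R_scope.

Lemma lub_all : Lub_Rbar (fun _ : R => True) = p_infty.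
Proof.
  apply is_lub_Rbar_unique. split.
  - intros x _. exact I.
  - intros b Hb. destruct b as [x| |]; simpl; auto.
    + specialize (Hb (x+1) I). simpl in Hb. lra.
    + specialize (Hb 0 I). simpl in Hb. exact Hb.
Qed.

Lemma RInt_nonex (f : R -> R) a b : ~ ex_RInt f a b -> RInt f a b = 0.
Proof. intro H. unfold RInt, iota.
  assert (E : (fun A : R -> Prop => forall x : R, is_RInt f a b x -> A x) = (fun _ => True)).
  { apply functional_extensionality; intro A. apply propositional_extensionality.
    split; auto. intros _ x Hx. exfalso. apply H. exists x. exact Hx. }
  change (R_complete_lim (fun A : R -> Prop => forall x : R, is_RInt f a b x -> A x) = 0).
  rewrite E. unfold R_complete_lim. rewrite lub_all. reflexivity.
Qed.

Lemma is_RInt_neg (g : R -> R) r l : is_RInt g (-r) r l -> is_RInt (fun y => g (-y)) (-r) r l.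
Proof. intro H.
  assert (H1 : is_RInt g (- r) (- - r) l) by (rewrite Ropp_involutive; exact H).
  apply is_RInt_comp_opp in H1. apply is_RInt_swap in H1. apply is_RInt_opp in H1.
  rewrite opp_opp in H1.
  eapply is_RInt_ext; [| exact H1]. intros x _. apply opp_opp.
Qed.

Lemma RInt_neg (g : R -> R) r : RInt (fun y => g (-y)) (-r) r = RInt g (-r) r.
Proof.
  destruct (classic (ex_RInt g (-r) r)) as [[l Hl]|Hn].
  - rewrite (is_RInt_unique _ _ _ _ Hl). apply is_RInt_unique. apply is_RInt_neg. exact Hl.
  - rewrite (RInt_nonex _ _ _ Hn). apply RInt_nonex. intros [l Hl]. apply Hn. exists l.
    apply is_RInt_neg in Hl. eapply is_RInt_ext; [| exact Hl]. intros x _. simpl. now rewrite Ropp_involutive.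
Qed.

Lemma RInt_opp' (g : R -> R) a b : RInt (fun y => - g y) a b = - RInt g a b.
Proof.
  destruct (classic (ex_RInt g a b)) as [He|Hn].
  - exact (RInt_opp g a b He).
  - rewrite (RInt_nonex _ _ _ Hn). rewrite RInt_nonex. exact (Logic.eq_sym Ropp_0). intro He. apply Hn.
    apply ex_RInt_opp in He. eapply ex_RInt_ext; [| exact He]. intros x _. simpl. unfold opp; simpl. apply Ropp_involutive.
Qed.

Definition negv (y : nat -> R) : nat -> R := fun i => - y i.

Lemma BI_neg k : forall r f, ball_integral k r (fun y => f (negv y)) = ball_integral k r f.
Proof.
  induction k as [|k IH]; intros r f; simpl.
  - f_equal. apply functional_extensionality. intro. unfold negv. exact Ropp_0.
  - set (G := fun t => ball_integral k (sqrt (r * r - t * t))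
                (fun y => f (fun i => match i with O => t | S i' => y i' end))).
    transitivity (RInt (fun t => G (- t)) (- r) r).
    + apply RInt_ext. intros t _. unfold G.
      replace (r * r - - t * - t) with (r * r - t * t) by ring.
      rewrite <- (IH _ (fun y => f (fun i => match i with O => - t | S i' => y i' end))).
      f_equal. apply functional_extensionality. intro y. f_equal.
      apply functional_extensionality. intros [|i]; unfold negv; ring.
    + apply RInt_neg.
Qed.

Lemma BI_opp k : forall r f, ball_integral k r (fun y => - f y) = - ball_integral k r f.
Proof.
  induction k as [|k IH]; intros r f; simpl.
  - reflexivity.
  - rewrite <- RInt_opp'. apply RInt_ext. intros t _. apply IH.
Qed.

Lemma BI_odd k r f : (forall y, f (negv y) = - f y) -> ball_integral k r f = 0.
Proof.
  intro Hf. assert (E : ball_integral k r f = - ball_integral k r f).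
  { rewrite <- BI_opp, <- BI_neg. f_equal. apply functional_extensionality. exact Hf. }
  lra.
Qed.

End IntPart.

From mathcomp Require Import ring lra.
Import GRing.Theory Num.Theory.
Set Implicit Arguments. Unset Strict Implicit.
Local Open Scope ring_scope.
Local Open Scope ring_scope.

Definition lin n (q : 'I_n.+2 -> 'rV[R]_n.+1) j : {mpoly R[n.+1]} :=
  \sum_(k < n.+1) q j 0 k *: 'X_k.
Definition hq n (q : 'I_n.+2 -> 'rV[R]_n.+1) : {mpoly R[n.+1]} :=
  \sum_j (lin q j) ^+ 3.

Lemma dotvE m (x y : 'rV[R]_m) : dotv x y = \sum_k x 0 k * y 0 k.
Proof. by rewrite /dotv mxE; apply: eq_bigr => k _; rewrite mxE. Qed.

Lemma peval_lin n q j x : peval (@lin n q j) x = dotv x (q j).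
Proof.
rewrite /peval /lin dotvE (big_morph _ (mevalD _) (meval0 _)); apply: eq_bigr => k _.
by rewrite mevalZ mevalXU mulrC.
Qed.

Lemma peval_h n q x : peval (@hq n q) x = \sum_j (dotv x (q j)) ^+ 3.
Proof.
rewrite /peval /hq (big_morph _ (mevalD _) (meval0 _)); apply: eq_bigr => j _.
by rewrite rmorphXn -peval_lin.
Qed.

Lemma lin_homog n q j : @lin n q j \is 1.-homog.
Proof.
apply: rpred_sum => k _; apply: rpredZ.
by rewrite dhomogX; apply/eqP; apply: mdeg1.
Qed.

Lemma hq_homog n q : @hq n q \is 3.-homog.
Proof.
apply: rpred_sum => j _.
exact: (dhomogMn 3 (lin_homog q j)).
Qed.

Lemma mderiv_lin n q j i : mderiv i (@lin n q j) = (q j 0 i)%:MP.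
Proof.
rewrite /lin (big_morph _ (@mderivD _ _ i) (@mderiv0 _ _ i)) (bigD1 i) //= big1 ?addr0.
  rewrite mderivZ mderivX mnm1E eqxx.
  have -> : (U_(i) - U_(i))%MM = 0%MM by apply/mnmP => l; rewrite mnmBE mnm0E subnn.
  by rewrite mpolyX0 scale1r -alg_mpolyC.
move=> k /negPf kNi; rewrite mderivZ mderivX mnm1E kNi scale0r scaler0 //.
Qed.

Lemma mderiv2_cube n i (p : {mpoly R[n]}) c :
  mderiv i p = c%:MP -> mderiv i (mderiv i (p ^+ 3)) = (c ^+ 2 * 6) *: p.
Proof.
move=> Hp.
rewrite !exprS expr0 mulr1 !mderivM Hp !(mderivD, mderivM, Hp, mderivC) -mul_mpolyC expr0 mulr1 !mpolyCM mpolyC_nat.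

ring.
Qed.

Lemma sum_dot n (q : 'I_n.+2 -> 'rV[R]_n.+1) i :
  regular_simplex q -> \sum_j dotv (q i) (q j) = 0.
Proof.
move=> [H1 Ho].
rewrite (bigD1 i) //= H1 (eq_bigr (fun _ => - (n.+1%:R)^-1)); last first.
  by move=> j jNi; rewrite Ho // eq_sym.
rewrite sumr_const cardC1 card_ord /= -[_ *+ n.+1]mulr_natr.
have N0 : n.+1%:R != 0 :> R by rewrite pnatr_eq0.
by rewrite mulNr mulVf // subrr.
Qed.

Lemma sum_coord n (q : 'I_n.+2 -> 'rV[R]_n.+1) k :
  regular_simplex q -> \sum_j q j 0 k = 0.
Proof.
move=> Hq.
have H : \sum_(l < n.+1) (\sum_j q j 0 l) ^+ 2 = 0.
  transitivity (\sum_i \sum_j dotv (q i) (q j)); last first.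
    by rewrite big1 // => i _; apply: sum_dot.
  rewrite (eq_bigr (fun l => \sum_i \sum_j q i 0 l * q j 0 l)); last first.
    by move=> l _; rewrite expr2 mulr_suml; apply: eq_bigr => i _; rewrite mulr_sumr.
  rewrite exchange_big; apply: eq_bigr => i _; rewrite exchange_big.
  by apply: eq_bigr => j _; rewrite dotvE.
have Hk : (\sum_j q j 0 k) ^+ 2 = 0.
  by apply: (psumr_eq0P _ H) => // l _; exact: sqr_ge0.
by move/eqP: Hk; rewrite sqrf_eq0 => /eqP.
Qed.

Lemma mderiv_sum n m i (F : 'I_m -> {mpoly R[n]}) :
  mderiv i (\sum_(j < m) F j) = \sum_(j < m) mderiv i (F j).
Proof.
elim/big_rec2: _ => [|j x y _ <-]; first exact: mderiv0.
exact: mderivD.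
Qed.

Lemma hq_harmonic n (q : 'I_n.+2 -> 'rV[R]_n.+1) :
  regular_simplex q -> harmonic (hq q).
Proof.
move=> Hq; rewrite /harmonic /hq.
rewrite (eq_bigr (fun i => \sum_j ((q j 0 i) ^+ 2 * 6) *: lin q j)); last first.
  move=> i _; rewrite !mderiv_sum.
  by apply: eq_bigr => j _; apply: mderiv2_cube; apply: mderiv_lin.
rewrite exchange_big /=.
rewrite (eq_bigr (fun j => 6 *: lin q j)); last first.
  move=> j _; rewrite -scaler_suml -mulr_suml.
  have -> : \sum_i q j 0 i ^+ 2 = 1 by rewrite -(proj1 Hq j) dotvE; apply: eq_bigr => i _; rewrite expr2.
  by rewrite mul1r.
rewrite -scaler_sumr /lin exchange_big /=.
rewrite big1 ?scaler0 // => k _.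
by rewrite -scaler_suml sum_coord // scale0r.
Qed.

Lemma simplex_inj n (q : 'I_n.+2 -> 'rV[R]_n.+1) :
  regular_simplex q -> injective q.
Proof.
move=> [H1 Ho] i k Eik; apply/eqP; apply/negPn/negP => ik.
have := Ho i k ik; rewrite Eik H1 => /eqP.
apply/negP; rewrite -subr_eq0 opprK.
by apply: lt0r_neq0; rewrite ltr_wpDr // invr_ge0 ler0n.
Qed.

Lemma hq_sym n (q : 'I_n.+2 -> 'rV[R]_n.+1) :
  regular_simplex q -> symmetric_q q (hq q).
Proof.
move=> Hq M [[HMM _] [Hex _]] x; rewrite !peval_h.
pose s i := odflt i [pick j | q i *m M == q j].
have Hs i : q i *m M = q (s i).
  rewrite /s; case: pickP => [j /eqP //|none].
  by have [j Hj] := Hex i; move: (none j); rewrite Hj eqxx.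
have Hinv i : q (s i) *m M^T = q i by rewrite -Hs -mulmxA HMM mulmx1.
have s_inj : injective s.
  move=> i k E; apply: (simplex_inj Hq).
  by rewrite -(Hinv i) -(Hinv k) E.
rewrite (reindex_inj s_inj); apply: eq_bigr => i _.
congr (_ ^+ 3); rewrite /dotv -Hs trmx_mul !mulmxA -(mulmxA x) HMM mulmx1.
by [].
Qed.

Lemma hq_neq0 n (q : 'I_n.+2 -> 'rV[R]_n.+1) :
  (2 <= n)%N -> regular_simplex q -> hq q != 0.
Proof.
move=> n2 [H1 Ho]; apply/eqP => H0.
have := congr1 (fun p => peval p (q ord0)) H0; rewrite /= peval_h.
rewrite /peval meval0 big_ord_recl H1 expr1n.
rewrite (eq_bigr (fun _ => (- n.+1%:R^-1) ^+ 3)); last first.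
  by move=> i _; rewrite Ho // eq_sym neq_lift.
rewrite sumr_const card_ord -[_ *+ n.+1]mulr_natr.
have N3 : 3 <= n.+1%:R :> R by rewrite (ler_nat R 3 n.+1) ltnS.
have Np : 0 < n.+1%:R :> R by rewrite ltr0n.
set N := n.+1%:R in N3 Np *.
have Ha : N^-1 * N = 1 by rewrite mulVf // lt0r_neq0.
have a0 : 0 < N^-1 by rewrite invr_gt0.
set a := N^-1 in Ha a0 *.
move=> E.
have E2 : 1 - a ^+ 2 = 0.
  rewrite -E; have -> : (- a) ^+ 3 * N = - (a ^+ 2 * (a * N)) by ring.
  by rewrite Ha mulr1.
clearbody a N; clear H0 Ho H1 E; nra.
Qed.

Lemma negvE (y : nat -> R) i : IntPart.negv y i = - y i.
Proof. by []. Qed.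

Lemma cubeN (d : R) : (- d) ^+ 3 = - (d ^+ 3).
Proof. by rewrite exprNn exprS sqrrN expr1n mulr1 mulN1r. Qed.

Lemma hq_odd n (q : 'I_n.+2 -> 'rV[R]_n.+1) (y : nat -> R) :
  peval (hq q) (\row_(i < n.+1) IntPart.negv y i)
  = - peval (hq q) (\row_(i < n.+1) y i).
Proof.
rewrite !peval_h -sumrN; apply: eq_bigr => j _.
rewrite !dotvE -cubeN.
congr (_ ^+ 3); rewrite -sumrN; apply: eq_bigr => k _.
by rewrite !mxE negvE mulNr.
Qed.

Theorem lemma8p1 (n : nat) (q : 'I_n.+2 -> 'rV[R]_n.+1) :
  (2 <= n)%N ->
  regular_simplex q ->
  exists h : {mpoly R[n.+1]},
    [/\ h != 0, h \is 3.-homog, harmonic h, symmetric_q q h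
      & unit_ball_integral h = 0].
Proof.
move=> n2 Hq; exists (hq q); split.
- exact: hq_neq0.
- exact: hq_homog.
- exact: hq_harmonic.
- exact: hq_sym.
- rewrite /unit_ball_integral; apply: IntPart.BI_odd => y.
  exact: (hq_odd q y).
Qed.
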